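(* Let $(X,\leqslant)$ be a finite partially ordered set with a maximum element, $U$ a finite set of users and $\lambda\colon U\to X$. Then among the spanning out-trees of $H^*=(X,E_0^* )$ that have minimum weight with respect to $\omega$, there exists one, $T=(X,E)$, with $E\subseteq E_0$.
   Context: $E_0=\{xy: x,y\in X,\ y\lessdot x\}$ is the arc set of the Hasse diagram, where $y\lessdot x$ means $y<x$ and there is no $z$ with $y<z<x$. $E_0^*=\{xy:x,y\in X,\ x>y\}$. A spanning out-tree of $H^*$ is a subgraph with vertex set $X$ that is a rooted tree with arcs oriented away from the root; its weight is the sum of its arc weights. $U(x)=\{u\in U:\lambda(u)=x\}$; for $yz\in E_0^*$, $\gamma(yz)=\{x\in X:x\geqslant z,\ x\not\geqslant y\}$ and $\omega(yz)=\sum_{x\in\gamma(yz)}|U(x)|$. *)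

(* Defs.v *)
From HB Require Import structures.
From mathcomp Require Import all_boot all_order.
Set Implicit Arguments. Unset Strict Implicit. Unset Printing Implicit Defensive.
Import Order.TTheory.
Local Open Scope order_scope.

Section Defs.
Variables (d : Order.disp_t) (X : finPOrderType d) (U : finType) (lambda : U -> X).

Definition covers (y x : X) : bool := (y < x) && [forall z, ~~ ((y < z) && (z < x))].

(* An arc xy is the ordered pair (x, y), oriented from x to y. *)
Definition E0 : {set X * X} := [set a | covers a.2 a.1].
Definition E0star : {set X * X} := [set a | a.2 < a.1].

Definition Uof (x : X) : {set U} := [set u | lambda u == x].
Definition gamma (a : X * X) : {set X} := [set x | (a.2 <= x) && ~~ (a.1 <= x)].
Definition omega (a : X * X) : nat := \sum_(x in gamma a) #|Uof x|.

Definition weight (E : {set X * X}) : nat := \sum_(a in E) omega a.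

Definition out_tree_at (r : X) (E : {set X * X}) : bool :=
  [&& #|[set a in E | a.2 == r]| == 0,
      [forall v, (v != r) ==> (#|[set a in E | a.2 == v]| == 1)] &
      [forall v, connect (fun x y => (x, y) \in E) r v]].

Definition spanning_out_tree (E : {set X * X}) : Prop :=
  E \subset E0star /\ exists r, out_tree_at r E.

Definition min_spanning_out_tree (E : {set X * X}) : Prop :=
  spanning_out_tree E /\
  forall E', spanning_out_tree E' -> weight E <= weight E'.
End Defs.

(* Main.v *)
Require Import Defs.
From mathcomp Require Import all_boot all_order.
Set Implicit Arguments. Unset Strict Implicit. Unset Printing Implicit Defensive.
Import Order.TTheory.
Local Open Scope order_scope.

Lemma gamma_mono (d : Order.disp_t) (X : finPOrderType d) (v w y : X) :
  w <= y -> gamma (w, v) \subset gamma (y, v).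
Proof.
move=> wy; apply/subsetP => x; rewrite !inE /= => /andP[-> H] /=.
apply: contra H => yx; exact: le_trans wy yx.
Qed.

Lemma omega_mono (d : Order.disp_t) (X : finPOrderType d) (U : finType)
  (lambda : U -> X) (v w y : X) :
  w <= y -> (omega lambda (w, v) <= omega lambda (y, v))%N.
Proof.
move=> wy; rewrite /omega [X in (_ <= X)%N](big_setID (gamma (w, v))) /=.
rewrite (setIidPr (gamma_mono v wy)); exact: leq_addr.
Qed.

Lemma cover_exists (d : Order.disp_t) (X : finPOrderType d) (U : finType)
  (lambda : U -> X) (v y : X) : v < y ->
  exists w, covers v w /\ forall w', v < w' -> (omega lambda (w, v) <= omega lambda (w', v))%N.
Proof.
move=> vy.
pose P1 := fun w : X => v < w.
have [w2 P2 H2] := @arg_minnP _ y P1 (fun w => omega lambda (w, v)) vy.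
pose P3 := fun w : X => (v < w) && (omega lambda (w, v) == omega lambda (w2, v)).
have P3w2 : P3 w2 by rewrite /P3 (P2 : v < w2) eqxx.
have [w3 /andP[vw3 /eqP ew3] H3] :=
  @arg_minnP _ w2 P3 (fun w => #|[set x | x < w]|) P3w2.
exists w3; split; last first.
  by move=> w' vw'; rewrite ew3; apply: H2.
rewrite /covers vw3 /=; apply/forallP => z; apply/negP => /andP[vz zw3].
have Pz : P3 z.
  rewrite /P3 vz eqn_leq H2 // -ew3 andbT.
  exact: omega_mono (ltW zw3).
have := H3 z Pz; apply/negP; rewrite -ltnNge.
apply: proper_card; apply/properP; split.
  apply/subsetP => x; rewrite !inE => xz; exact: lt_trans xz zw3.
by exists z; rewrite !inE ?zw3 ?ltxx.
Qed.

Lemma connect_le (d : Order.disp_t) (X : finPOrderType d) (E : {set X * X}) :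
  E \subset E0star X -> forall x y, connect (fun x y => (x, y) \in E) x y -> y <= x.
Proof.
move=> sE x y /connectP[p]; elim: p x => [|z p IH] x /=; first by move=> _ ->.
move=> /andP[xz pz] ey; have := IH z pz ey => yz.
have : (x, z) \in E0star X by apply: (subsetP sE).
rewrite inE /= => zx; exact: le_trans yz (ltW zx).
Qed.

Lemma in_arc_exists (d : Order.disp_t) (X : finPOrderType d) (E : {set X * X}) (m : X) :
  (forall x, x <= m) -> spanning_out_tree E ->
  forall j, j != m -> exists a, (a \in E) && (a.2 == j).
Proof.
move=> mmax [sE [r /and3P[_ /forallP H1 /forallP H2]]] j jm.
have rm : r = m.
  apply/le_anti; rewrite mmax /=; exact: connect_le sE _ _ (H2 m).
have := H1 j; rewrite rm jm /= => /eqP c1.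
have : (0 < #|[set a in E | a.2 == j]|)%N by rewrite c1.
by move=> /card_gt0P[a]; rewrite inE => Ha; exists a.
Qed.

Theorem corollary4 (d : Order.disp_t) (X : finPOrderType d) (U : finType)
  (lambda : U -> X) :
  (exists m : X, forall x : X, x <= m) ->
  exists E : {set X * X},
    min_spanning_out_tree lambda E /\ E \subset E0 X.
Proof.
move=> [m mmax].
pose q v := odflt v [pick w | covers v w &&
   [forall w', (v < w') ==> (omega lambda (w,v) <= omega lambda (w',v))%N]].
have qP : forall v, v != m -> covers v (q v) /\
    forall w', v < w' -> (omega lambda (q v, v) <= omega lambda (w', v))%N.
  move=> v vm; rewrite /q; case: pickP => [w /andP[cw /forallP Hw] | none] /=.
    by split=> // w' vw'; have := Hw w'; rewrite vw'.
  have vlt : v < m by rewrite lt_def eq_sym vm mmax.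
  have [w [cw Hw]] := cover_exists lambda vlt.
  have := none w; rewrite cw /=; move/negP; case; apply/forallP => w'.
  by apply/implyP; apply: Hw.
pose T := [set a : X * X | (a.2 != m) && (a.1 == q a.2)].
have TE0 : T \subset E0 X.
  apply/subsetP => -[x y]; rewrite !inE /= => /andP[ym /eqP ->].
  by case: (qP y ym).
have TE0s : T \subset E0star X.
  apply/subsetP => a /(subsetP TE0); rewrite !inE => /andP[] //.
have conT : forall v, connect (fun x y => (x, y) \in T) m v.
  move=> v; have [n] := ubnP #|[set x | v < x]|.
  elim: n v => // n IH v lt.
  have [->|vm] := eqVneq v m; first exact: connect0.
  have [/andP[vq _] _] := qP v vm.
  apply: (connect_trans (y := q v)).
    apply: IH; rewrite ltnS in lt; apply: (leq_trans _ lt); apply: proper_card; apply/properP; split.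
      apply/subsetP => x; rewrite !inE => qx; exact: lt_trans vq qx.
    by exists (q v); rewrite !inE ?vq ?ltxx.
  by apply: connect1; rewrite inE /= vm eqxx.
have spT : spanning_out_tree T.
  split=> //; exists m; apply/and3P; split.
  - rewrite cards_eq0; apply/eqP/setP => -[x y].
    by rewrite !inE /=; case: (y =P m) => [->|]; rewrite ?eqxx ?andbF.
  - apply/forallP => v; apply/implyP => vm.
    apply/eqP; rewrite -(cards1 (q v, v)); apply: eq_card => -[x y].
    rewrite !inE /= xpair_eqE; case: (y =P v) => [->|_]; rewrite ?vm ?andbT ?andbF //.
  - by apply/forallP => v; apply: conT.
exists T; split=> //; split=> // E' spE'.
rewrite /weight (partition_big (fun a : X * X => a.2) xpredT) //.
rewrite [X in _ <= X](partition_big (fun a : X * X => a.2) xpredT) //.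
apply: leq_sum => j _.
have [->|jm] := eqVneq j m.
  rewrite big_pred0 // => -[x y]; rewrite !inE /=.
  by case: (y =P m) => [->|]; rewrite ?eqxx ?andbF.
rewrite (big_pred1 (q j, j)); last first.
  move=> -[x y]; rewrite /= inE /= xpair_eqE.
  by case: (y =P j) => [->|_]; rewrite ?jm ?andbT ?andbF.
have [a /andP[aE /eqP a2]] := in_arc_exists mmax spE' jm.
rewrite (bigD1 a) /=; last by rewrite aE a2 eqxx.
apply: leq_trans _ (leq_addr _ _).
have : a \in E0star X by apply: (subsetP spE'.1).
rewrite inE a2 => ja.
have [_ Hq] := qP j jm; have := Hq _ ja.
by case: a {aE ja} a2 => x y /= ->.
Qed.
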